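(* Let $k$ be a field of characteristic $p$. If $G$ is $C_2$ (with $p=2$) or $C_3$ (with $p=3$), then $\mathrm{StMod}(kG)$ has no non-trivial ghosts.
   Context: $\mathrm{StMod}(kG)$ is the stable module category of left $kG$-modules: morphisms $\underline{\mathrm{Hom}}_{kG}(M,N)$ are $kG$-homomorphisms modulo those factoring through a projective module; it is triangulated with unit $k$ and desuspension $\Omega$ ($\Omega M$ the kernel of a projective cover of $M$). A map $f\colon M\to N$ is a ghost if the induced map $\underline{\mathrm{Hom}}_{kG}(\Omega^i k,M)\to\underline{\mathrm{Hom}}_{kG}(\Omega^i k,N)$ (Tate cohomology) is zero for all $i\in\mathbb{Z}$; it is trivial if it factors through a projective module. *)

(* Defs.v *)
From HB Require Import structures.
From mathcomp Require Import all_boot all_order all_algebra all_fingroup.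
Set Implicit Arguments. Unset Strict Implicit. Unset Printing Implicit Defensive.
Import GRing.Theory.
Local Open Scope ring_scope.

(* A (left) kG-module, G = the whole finite group gT, presented as a
   k-vector space (arbitrary, not necessarily finite-dimensional) with a
   k-linear action of G. This is the standard equivalence kG-Mod ~ Rep_k(G). *)
Record kGmod (k : fieldType) (gT : finGroupType) := KGMod {
  carrier :> lmodType k;
  act : gT -> carrier -> carrier;
  act_lin : forall g (a : k) (u v : carrier), act g (a *: u + v) = a *: act g u + act g v;
  act1 : forall v, act 1%g v = v;
  actM : forall g h v, act (g * h)%g v = act g (act h v)
}.

Section Defs.
Variables (k : fieldType) (gT : finGroupType).
Local Notation mod := (kGmod k gT).

Definition is_hom (M N : mod) (f : M -> N) : Prop :=
  (forall (a : k) (u v : M), f (a *: u + v) = a *: f u + f v) /\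
  (forall g (v : M), f (act g v) = act g (f v)).

Definition projective (P : mod) : Prop :=
  forall (A B : mod) (pi : A -> B) (f : P -> B),
    is_hom pi -> (forall y, exists x, pi x = y) -> is_hom f ->
    exists g : P -> A, is_hom g /\ forall x, pi (g x) = f x.

(* a map is trivial (zero in StMod) if it factors through a projective *)
Definition trivial_map (M N : mod) (f : M -> N) : Prop :=
  exists (P : mod) (a : M -> P) (b : P -> N),
    [/\ projective P, is_hom a, is_hom b & forall x, f x = b (a x)].

(* Q is (a representative, up to projective summands, of) Omega M:
   the kernel of a surjection from a projective module onto M. *)
Definition IsOmega (M Q : mod) : Prop :=
  exists (P : mod) (pi : P -> M) (iota : Q -> P),
    [/\ projective P, is_hom pi, is_hom iota,
        (forall y, exists x, pi x = y) &
        (injective iota /\ forall x, pi x = 0 <-> exists q, iota q = x)].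

Fixpoint OmegaPow (n : nat) (M Q : mod) : Prop :=
  match n with
  | 0 => Q = M
  | n'.+1 => exists X : mod, OmegaPow n' M X /\ IsOmega X Q
  end.

(* Q represents Omega^{-n} M  (n >= 0): Omega Q represents Omega^{-(n-1)} M *)
Fixpoint OmegaNeg (n : nat) (M Q : mod) : Prop :=
  match n with
  | 0 => Q = M
  | n'.+1 => exists X : mod, OmegaNeg n' M X /\ IsOmega Q X
  end.

Definition triv_act (g : gT) (v : k^o) : k^o := v.

Lemma triv_act_lin g (a : k) (u v : k^o) :
  triv_act g (a *: u + v) = a *: triv_act g u + triv_act g v.
Proof. by []. Qed.
Lemma triv_act1 v : triv_act 1%g v = v. Proof. by []. Qed.
Lemma triv_actM g h v : triv_act (g * h)%g v = triv_act g (triv_act h v).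
Proof. by []. Qed.

Definition triv_mod : mod := KGMod triv_act_lin triv_act1 triv_actM.

(* ghost: the induced map on Tate cohomology
   Hom_stable(Omega^i k, M) -> Hom_stable(Omega^i k, N) vanishes for all i in Z *)
Definition ghost (M N : mod) (f : M -> N) : Prop :=
  is_hom f /\
  forall (n : nat) (Q : mod) (h : Q -> M),
    (OmegaPow n triv_mod Q \/ OmegaNeg n triv_mod Q) ->
    is_hom h -> trivial_map (f \o h).

End Defs.

(* Main.v *)
Require Import Defs.
From mathcomp Require Import all_boot all_order all_algebra all_fingroup.
From mathcomp Require classical_sets boolp.
From mathcomp Require Import ring.
Set Implicit Arguments. Unset Strict Implicit. Unset Printing Implicit Defensive.
Import GRing.Theory.
Local Open Scope ring_scope.

Section LinAlg.
Variables (k : fieldType) (V A : lmodType k).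

Lemma combo_eq (W : lmodType k) (c c1 c2 : k) (w1 w2 v : W) :
  c *: (w1 + c1 *: v) + (w2 + c2 *: v) = c *: w1 + w2 + (c * c1 + c2) *: v.
Proof. by rewrite scalerDr scalerA addrACA scalerDl. Qed.

Lemma swap_eq (W : zmodType) (a b c d : W) : a + b = c + d -> b - d = c - a.
Proof. by move=> h; apply/eqP; rewrite subr_eq addrAC -h [a + b]addrC addrK. Qed.

Definition subsp (G : V -> A -> Prop) :=
  G 0 0 /\ forall c v a v' a', G v a -> G v' a' -> G (c *: v + v') (c *: a + a').
Definition functional (G : V -> A -> Prop) := forall v a b, G v a -> G v b -> a = b.

Lemma Zmax (Phi G0 : V -> A -> Prop) : subsp Phi -> subsp G0 -> functional G0 ->
  (forall v a, G0 v a -> Phi v a) ->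
  exists G, [/\ subsp G, functional G, (forall v a, G0 v a -> G v a),
     (forall v a, G v a -> Phi v a) & forall v a, Phi v a -> exists b, G v b].
Proof.
move=> [Phi0 PhiC] [G00 G0C] fG0 G0Phi.
pose Q (X : (V * A)%type -> Prop) :=
  [/\ subsp (fun v a => X (v, a) \/ G0 v a),
      functional (fun v a => X (v, a) \/ G0 v a) &
      (forall v a, X (v, a) -> Phi v a)].
have := @classical_sets.Zorn_bigcup _ Q.
case.
- move=> F FQ Ftot.
  pose U := (classical_sets.bigcup F id).
  have common : forall v a v' a', (U (v, a) \/ G0 v a) -> (U (v', a') \/ G0 v' a') ->
      exists Y, [/\ Q Y, (forall p, Y p -> U p), (Y (v, a) \/ G0 v a) & (Y (v', a') \/ G0 v' a')].
    move=> v a v' a' H1 H2.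
    case: H1 => [[X1 FX1 X1va]|g1]; case: H2 => [[X2 FX2 X2va]|g2].
    + case: (Ftot _ _ FX1 FX2) => [S12|S21].
      * exists X2; split => //; [exact: FQ|by move=> p Xp; exists X2|by left; apply: S12|by left].
      * exists X1; split => //; [exact: FQ|by move=> p Xp; exists X1|by left|by left; apply: S21].
    + exists X1; split => //; [exact: FQ|by move=> p Xp; exists X1|by left|by right].
    + exists X2; split => //; [exact: FQ|by move=> p Xp; exists X2|by right|by left].
    + exists (fun _ => False); split => //; [|by right|by right].
      split.
      * split; first by right.
        move=> c v1 a1 v1' a1' [//|h1] [//|h2]; right; exact: G0C.
      * move=> v1 a1 b1 [//|h1] [//|h2]; exact: fG0 h1 h2.
      * by [].
  split.
  + split; first by right.
    move=> c v a v' a' H1 H2.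
    have [Y [[[_ YC] _ _] YU h1 h2]] := common _ _ _ _ H1 H2.
    case: (YC c v a v' a' h1 h2) => [Yp|g]; [left; exact: YU|by right].
  + move=> v a b H1 H2.
    have [Y [[_ Yf _] _ h1 h2]] := common _ _ _ _ H1 H2.
    exact: Yf h1 h2.
  + move=> v a [X FX Xva]; have [_ _ XP] := FQ X FX; exact: XP.
move=> X [[[X0 XC] Xf XP] Xmax].
pose G := fun v a => X (v, a) \/ G0 v a.
have GP : forall v a, G v a -> Phi v a by move=> v a [h|h]; [exact: XP|exact: G0Phi].
exists G; split.
- by split.
- exact: Xf.
- by move=> v a h; right.
- exact: GP.
move=> v a Pva.
apply: boolp.contrapT => nex.
pose B := fun p : (V * A)%type => exists c w d, G w d /\ p = (w + c *: v, d + c *: a).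
have GB : forall w d, G w d -> B (w, d).
  by move=> w d h; exists 0, w, d; rewrite !scale0r !addr0.
have BG0 : forall w d, B (w, d) \/ G0 w d -> B (w, d).
  by move=> w d [//|h]; apply: GB; right.
apply: (Xmax B).
- split; first by move=> [w d] h; apply: GB; left.
  move=> XB; have : B (v, a) by exists 1, 0, 0; split; [exact: X0|rewrite !add0r !scale1r].
  move=> /XB Xva; apply: nex; exists a; by left.
split.
- split; first by left; apply: GB; exact: X0.
  move=> c v1 a1 v2 a2 /BG0 [c1 [w1 [d1 [G1 [-> ->]]]]] /BG0 [c2 [w2 [d2 [G2 [-> ->]]]]].
  left; exists (c * c1 + c2), (c *: w1 + w2), (c *: d1 + d2); split.
    exact: XC.
  by rewrite !combo_eq.
- move=> v1 a1 b1 /BG0 [c1 [w1 [d1 [G1 [e1 e2]]]]] /BG0 [c2 [w2 [d2 [G2 [e3 e4]]]]].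
  have ev : w1 + c1 *: v = w2 + c2 *: v by rewrite -e1 -e3.
  have [ec|nc] := eqVneq c1 c2.
    move: ev; rewrite ec => /addIr ew; rewrite -ew in G2.
    by rewrite e2 e4 ec (Xf _ _ _ G1 G2).
  exfalso; apply: nex.
  have cu : c1 - c2 != 0 by rewrite subr_eq0.
  have Gd := XC (-1) _ _ _ _ G1 G2.
  have Gs := XC ((c1 - c2)^-1) _ _ _ _ Gd X0.
  eexists; suff -> : v = (c1 - c2)^-1 *: (-1 *: w1 + w2) + 0 by exact: Gs.
  rewrite addr0 scaleN1r [_ + w2]addrC; apply: (@scalerI _ _ (c1 - c2)) => //.
  rewrite scalerA divff // scale1r scalerBl.
  exact: swap_eq.
- move=> w d [c [w1 [d1 [G1 [-> ->]]]]].
  by rewrite addrC [d1 + _]addrC; apply: PhiC => //; exact: GP.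
Qed.

Definition lin (U W : lmodType k) (f : U -> W) :=
  forall (c : k) (u v : U), f (c *: u + v) = c *: f u + f v.

Lemma ext_sel (Phi G0 : V -> A -> Prop) : subsp Phi -> subsp G0 -> functional G0 ->
  (forall v a, G0 v a -> Phi v a) ->
  exists w : V -> A, [/\ lin w, (forall v a, G0 v a -> w v = a) &
     forall v a, Phi v a -> Phi v (w v)].
Proof.
move=> sP sG0 fG0 G0P.
have [G1 [sG1 fG1 G01 G1P G1dom]] := Zmax sP sG0 fG0 G0P.
have sT : subsp (fun _ _ => True) by [].
have [G2 [sG2 fG2 G12 _ G2dom]] := Zmax sT sG1 fG1 (fun _ _ _ => I).
have tot : forall v, exists b, G2 v b by move=> v; exact: (G2dom v 0).
pose w v := proj1_sig (boolp.cid (tot v)).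
have wG : forall v, G2 v (w v) by move=> v; rewrite /w; case: (boolp.cid _).
exists w; split.
- move=> c u v; apply: (fG2 (c *: u + v)); first exact: wG.
  by case: sG2 => _ C; apply: C; exact: wG.
- by move=> v a h; apply: (fG2 v); [exact: wG|apply: G12; exact: G01].
- move=> v a Pva; have [b Gb] := G1dom v a Pva.
  by rewrite (fG2 v (w v) b (wG v) (G12 _ _ Gb)); exact: G1P.
Qed.

End LinAlg.


Section LinLemmas.
Variables (k : fieldType) (U W : lmodType k) (f : U -> W) (hf : lin f).
Lemma lin0 : f 0 = 0.
Proof. by have := hf (-1) 0 0; rewrite scaler0 addr0 scaleN1r addNr. Qed.
Lemma linD u v : f (u + v) = f u + f v.
Proof. by have := hf 1 u v; rewrite !scale1r. Qed.
Lemma linZ c u : f (c *: u) = c *: f u.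
Proof. by have := hf c u 0; rewrite !addr0 lin0 addr0. Qed.
Lemma linN u : f (- u) = - f u.
Proof. by rewrite -scaleN1r linZ scaleN1r. Qed.
Lemma linB u v : f (u - v) = f u - f v.
Proof. by rewrite linD linN. Qed.
Lemma lin_sum (I : Type) (r : seq I) (P : pred I) (F : I -> U) :
  f (\sum_(i <- r | P i) F i) = \sum_(i <- r | P i) f (F i).
Proof.
elim: r => [|a r IH]; first by rewrite !big_nil lin0.
by rewrite !big_cons; case: (P a) => //; rewrite linD IH.
Qed.
End LinLemmas.

Lemma lin_comp (k : fieldType) (U V W : lmodType k) (f : V -> W) (g : U -> V) :
  lin f -> lin g -> lin (f \o g).
Proof. by move=> hf hg c u v /=; rewrite hg hf. Qed.

Lemma lin_add (k : fieldType) (U W : lmodType k) (f g : U -> W) :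
  lin f -> lin g -> lin (fun v => f v + g v).
Proof. by move=> hf hg c u v; rewrite hf hg scalerDr addrACA. Qed.

Lemma lin_sub (k : fieldType) (U W : lmodType k) (f g : U -> W) :
  lin f -> lin g -> lin (fun v => f v - g v).
Proof. by move=> hf hg c u v; rewrite hf hg scalerBr opprD addrACA. Qed.

Lemma ext_sel0 (k : fieldType) (V A : lmodType k) (Phi : V -> A -> Prop) : subsp Phi ->
  exists w : V -> A, lin w /\ forall v a, Phi v a -> Phi v (w v).
Proof.
move=> sP.
have sZ : subsp (fun (v : V) (a : A) => v = 0 /\ a = 0).
  by split => // c v a v' a' [-> ->] [-> ->]; rewrite !scaler0 !addr0.
have fZ : functional (fun (v : V) (a : A) => v = 0 /\ a = 0) by move=> v a b [_ ->] [_ ->].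
have ZP : forall v a, (v = 0 /\ a = 0) -> Phi v a by move=> v a [-> ->]; exact: sP.1.
by have [w [lw _ wP]] := ext_sel sP sZ fZ ZP; exists w.
Qed.

Lemma lin_id (k : fieldType) (U : lmodType k) : lin (@id U).
Proof. by []. Qed.

Section Gen.
Variables (k : fieldType) (gT : finGroupType).
Local Notation mod := (kGmod k gT).

Lemma act_linP (M : mod) (t : gT) : lin (@Defs.act k gT M t).
Proof. exact: act_lin. Qed.

Lemma hom_lin (M N : mod) (f : M -> N) : is_hom f -> lin f.
Proof. by case. Qed.

Definition Fact (V : lmodType k) (t : gT) (phi : {ffun gT -> V}) : {ffun gT -> V} :=
  [ffun s => phi (t^-1 * s)%g].

Lemma Fact_lin (V : lmodType k) t (c : k) (u v : {ffun gT -> V}) :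
  Fact t (c *: u + v) = c *: Fact t u + Fact t v.
Proof. by apply/ffunP => s; rewrite !ffunE. Qed.
Lemma Fact1 (V : lmodType k) (v : {ffun gT -> V}) : Fact 1%g v = v.
Proof. by apply/ffunP => s; rewrite !ffunE invg1 mul1g. Qed.
Lemma FactM (V : lmodType k) t h (v : {ffun gT -> V}) : Fact (t * h)%g v = Fact t (Fact h v).
Proof. by apply/ffunP => s; rewrite !ffunE invMg mulgA. Qed.

Definition FM (V : lmodType k) : mod := KGMod (@Fact_lin V) (@Fact1 V) (@FactM V).

Definition bmap (V : lmodType k) (N : mod) (w : V -> N) (phi : FM V) : N :=
  \sum_s Defs.act s (w (phi s)).

Lemma bmap_hom (V : lmodType k) (N : mod) (w : V -> N) : lin w -> is_hom (bmap w).
Proof.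
move=> hw; split.
- move=> c u v; rewrite /bmap scaler_sumr -big_split /=; apply: eq_bigr => s _.
  by rewrite ffunE ffunE hw act_lin.
- move=> t phi; rewrite /bmap (lin_sum (act_linP t)).
  rewrite (reindex_inj (mulgI t)) /=; apply: eq_bigr => s _.
  by rewrite ffunE mulKg Defs.actM.
Qed.

Definition dl (V : lmodType k) (t : gT) (v : V) : {ffun gT -> V} :=
  [ffun s => if s == t then v else 0].

Lemma dl_lin (V : lmodType k) t : lin (@dl V t).
Proof.
move=> c u v; apply/ffunP => s; rewrite !ffunE.
by case: (s == t); rewrite ?scaler0 ?addr0.
Qed.

Lemma ffun_dl (V : lmodType k) (phi : {ffun gT -> V}) : phi = \sum_t dl t (phi t).
Proof.
apply/ffunP => s; rewrite sum_ffunE (bigD1 s) //= ffunE eqxx big1 ?addr0 //.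
by move=> t ts; rewrite ffunE eq_sym (negbTE ts).
Qed.

Lemma Fact_dl (V : lmodType k) t (v : V) : Fact t (dl 1%g v) = dl t v.
Proof.
apply/ffunP => s; rewrite !ffunE.
by rewrite -eq_mulVg1 eq_sym.
Qed.

Lemma bmap_dl (V : lmodType k) (N : mod) (w : V -> N) t v : lin w -> bmap w (dl t v) = Defs.act t (w v).
Proof.
move=> hw; rewrite /bmap (bigD1 t) //= ffunE eqxx big1 ?addr0 //.
move=> s st; rewrite ffunE (negbTE st) (lin0 hw); exact: (lin0 (act_linP s)).
Qed.

Lemma proj_F (V : lmodType k) : projective (FM V).
Proof.
move=> A B pi f hpi surj hf.
have lpi := hom_lin hpi; have lf := hom_lin hf.
pose Phi := fun (v : V) (a : A) => pi a = f (dl 1%g v).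
have sPhi : subsp Phi.
  split; first by rewrite /Phi (lin0 lpi) (lin0 (@dl_lin V 1%g)) (lin0 lf).
  by move=> c v a v' a'; rewrite /Phi => h1 h2; rewrite lpi h1 h2 dl_lin lf.
have sG0 : subsp (fun (v : V) (a : A) => v = 0 /\ a = 0).
  by split => // c v a v' a' [-> ->] [-> ->]; rewrite !scaler0 !addr0.
have fG0 : functional (fun (v : V) (a : A) => v = 0 /\ a = 0) by move=> v a b [_ ->] [_ ->].
have G0P : forall v a, (v = 0 /\ a = 0) -> Phi v a by move=> v a [-> ->]; exact: sPhi.1.
have [w [lw _ wP]] := @ext_sel _ _ _ Phi _ sPhi sG0 fG0 G0P.
have wP' : forall v, pi (w v) = f (dl 1%g v).
  by move=> v; have [a pa] := surj (f (dl 1%g v)); exact: (wP v a pa).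
exists (bmap w); split; first exact: bmap_hom.
move=> phi; rewrite /bmap (lin_sum lpi).
rewrite [in RHS](ffun_dl phi) (lin_sum lf); apply: eq_bigr => s _.
by rewrite hpi.2 wP' -hf.2 /= Fact_dl.
Qed.

Definition Tr (M N : mod) (lam : M -> N) (m : M) : N :=
  \sum_t Defs.act t (lam (Defs.act t^-1 m)).

Lemma Tr_trivial (M N : mod) (lam : M -> N) : lin lam -> trivial_map (Tr lam).
Proof.
move=> hl.
exists (FM M), (fun m => [ffun s => Defs.act (s^-1)%g m] : FM M), (bmap lam); split.
- exact: proj_F.
- split.
  + by move=> c u v; apply/ffunP => s; rewrite !ffunE act_lin.
  + move=> t m; apply/ffunP => s; rewrite /= !ffunE invMg invgK -Defs.actM.
    done.
- exact: bmap_hom.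
- by move=> m; rewrite /Tr /bmap; apply: eq_bigr => s _; rewrite ffunE.
Qed.

Lemma proj_split (P : mod) : projective P ->
  exists sigma : P -> FM P, is_hom sigma /\ forall z, bmap id (sigma z) = z.
Proof.
move=> pP; have hb := bmap_hom (@lin_id _ P).
have [s [hs sP]] := pP _ _ (bmap id) id hb
  (fun y => ex_intro _ (dl 1%g y) (etrans (bmap_dl _ _ (@lin_id _ P)) (Defs.act1 _)))
  (conj (fun _ _ _ => erefl) (fun _ _ => erefl)).
by exists s.
Qed.

Lemma proj_inv (P : mod) (z : P) : projective P ->
  (forall t, Defs.act t z = z) -> exists y, z = \sum_t Defs.act t y.
Proof.
move=> pP zinv; have [s [hs sP]] := proj_split pP.
have hb := bmap_hom (@lin_id _ P).
set phi := s z.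
have phiinv : forall t, Fact t phi = phi by move=> t; rewrite /phi -[Fact _ _]/(Defs.act t (s z)) -hs.2 zinv.
have phiC : forall t, phi t = phi 1%g.
  by move=> t; have := congr1 (fun u : {ffun gT -> P} => u t) (phiinv t); rewrite ffunE mulVg => <-.
exists (bmap id (dl 1%g (phi 1%g))).
rewrite -[in LHS](sP z) -/phi [in LHS](ffun_dl phi).
rewrite (lin_sum (hom_lin hb)); apply: eq_bigr => t _.
by rewrite phiC -Fact_dl -[Fact t _]/(Defs.act t (dl 1%g (phi 1%g) : FM P)) hb.2.
Qed.
End Gen.

Module C2M.

Section C2.
Variables (k : fieldType) (gT : finGroupType) (g : gT).
Hypotheses (cover : forall t : gT, t = 1%g \/ t = g) (g1 : g != 1%g)
  (gg : (g * g)%g = 1%g) (ch : (2%:R : k) = 0).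
Local Notation mod := (kGmod k gT).

Lemma sum2 (W : zmodType) (F : gT -> W) : \sum_t F t = F 1%g + F g.
Proof.
rewrite (bigD1 1%g) //= (bigD1 g) //= big1 ?addr0 //.
by move=> t /andP[t1 tg]; case: (cover t) => e; rewrite e eqxx ?andbF in t1 tg.
Qed.

Lemma two0 (M : lmodType k) (v : M) : v + v = 0.
Proof. by rewrite -mulr2n -scaler_nat ch scale0r. Qed.

Lemma oppself (M : lmodType k) (v : M) : - v = v.
Proof. by apply/eqP; rewrite eq_sym -addr_eq0 two0. Qed.

Definition xm (M : mod) (v : M) : M := Defs.act g v - v.

Lemma x_lin (M : mod) : lin (@xm M).
Proof.
by move=> c u v; rewrite /xm act_lin scalerBr addrACA opprD.
Qed.

Lemma xx (M : mod) (v : M) : xm (xm v) = 0.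
Proof.
rewrite /xm (linB (act_linP _)) -Defs.actM gg Defs.act1 opprB; exact: two0.
Qed.

Lemma hom_x (M N : mod) (f : M -> N) v : is_hom f -> f (xm v) = xm (f v).
Proof. by move=> hf; rewrite /xm (linB (hom_lin hf)) hf.2. Qed.

Lemma act_fix (M : mod) (v : M) : xm v = 0 -> forall t, Defs.act t v = v.
Proof.
move=> /eqP; rewrite subr_eq0 => /eqP h t.
by case: (cover t) => ->; rewrite ?h ?Defs.act1.
Qed.

Lemma actg_x (M : mod) (v : M) : Defs.act g v = v + xm v.
Proof. by rewrite /xm addrC subrK. Qed.

Lemma ghost_G1 (M N : mod) (f : M -> N) : ghost f ->
  forall v : M, xm v = 0 -> exists y, f v = xm y.
Proof.
move=> [hf gh] v xv.
pose h := fun c : triv_mod k gT => c *: v.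
have hh : is_hom h.
  split; first by move=> c a b; rewrite /h scalerDl scalerA.
  by move=> t c; rewrite /h (linZ (act_linP _)) (act_fix xv).
have [P [a [b [pP ha hb fe]]]] := gh 0 (triv_mod k gT) h (or_introl erefl) hh.
have zinv : forall t, Defs.act t (a 1) = a 1 by move=> t; rewrite -ha.2.
have [y zy] := proj_inv pP zinv.
exists (b y).
have -> : v = h 1 by rewrite /h scale1r.
rewrite -[f (h 1)]/((f \o h) 1) fe zy (lin_sum (hom_lin hb)) sum2.
by rewrite !hb.2 Defs.act1 /xm oppself addrC.
Qed.

Lemma core2 (M N : mod) (f : M -> N) : is_hom f ->
  (forall v : M, xm v = 0 -> exists y, f v = xm y) -> trivial_map f.
Proof.
move=> hf G1; have lf := hom_lin hf.
have lxM := @x_lin M; have lxN := @x_lin N.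
(* projection onto ker x *)
pose Phi1 := fun v a : M => xm a = 0.
have sPhi1 : subsp Phi1.
  split; first by rewrite /Phi1 (lin0 lxM).
  by move=> c v a v' a'; rewrite /Phi1 lxM => -> ->; rewrite scaler0 addr0.
pose G01 := fun v a : M => xm v = 0 /\ a = v.
have sG01 : subsp G01.
  split; first by split => //; rewrite (lin0 lxM).
  by move=> c v a v' a' [h1 ->] [h2 ->]; split => //; rewrite lxM h1 h2 scaler0 addr0.
have fG01 : functional G01 by move=> v a b [_ ->] [_ ->].
have G01P : forall v a, G01 v a -> Phi1 v a by move=> v a [h ->].
have [e1 [le1 e1K e1x']] := ext_sel sPhi1 sG01 fG01 G01P.
have e1x : forall v, xm (e1 v) = 0 by move=> v; apply: (e1x' v 0); rewrite /Phi1 (lin0 lxM).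
have e1K' : forall v, xm v = 0 -> e1 v = v by move=> v h; apply: e1K.
(* l0 : lift of f on ker x *)
pose Phi2 := fun (v : M) (a : N) => xm v = 0 /\ xm a = f v.
have sPhi2 : subsp Phi2.
  split; first by rewrite /Phi2 (lin0 lxM) (lin0 lxN) (lin0 lf).
  by move=> c v a v' a' [h1 h2] [h3 h4]; rewrite /Phi2 lxM lxN lf h1 h2 h3 h4 scaler0 addr0.
have [l0 [ll0 l0P']] := ext_sel0 sPhi2.
have l0P : forall v, xm v = 0 -> xm (l0 v) = f v.
  by move=> v h; have [y fy] := G1 v h; have [] := l0P' v y (conj h (esym fy)).
pose r := fun m : M => f (m - e1 m) - l0 (xm m).
have lr : lin r.
  apply: lin_sub; last exact: lin_comp.
  by apply: lin_comp => //; apply: lin_sub.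
have r0 : forall m1 m2, xm m1 = xm m2 -> r m1 = r m2.
  move=> m1 m2 e; apply/eqP; rewrite -subr_eq0 -(linB lr).
  have hd : xm (m1 - m2) = 0 by rewrite (linB lxM) e subrr.
  by rewrite /r hd e1K' // subrr (lin0 lf) (lin0 ll0) subrr.
pose Phi3 := fun (v : M) (a : N) => xm a = 0.
have sPhi3 : subsp Phi3.
  split; first by rewrite /Phi3 (lin0 lxN).
  by move=> c v a v' a'; rewrite /Phi3 lxN => -> ->; rewrite scaler0 addr0.
pose G3 := fun (v : M) (a : N) => exists m, v = xm m /\ a = r m.
have sG3 : subsp G3.
  split; first by exists 0; rewrite (lin0 lxM) (lin0 lr).
  move=> c v a v' a' [m1 [-> ->]] [m2 [-> ->]].
  by exists (c *: m1 + m2); rewrite lxM lr.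
have fG3 : functional G3.
  by move=> v a b [m1 [e1' ->]] [m2 [e2' ->]]; apply: r0; rewrite -e1' -e2'.
have G3P : forall v a, G3 v a -> Phi3 v a.
  move=> v a [m [-> ->]]; rewrite /Phi3 /r (linB lxN) -(hom_x _ hf) l0P ?xx //.
  by rewrite (linB lxM) e1x subr0 subrr.
have [d [ld dG3 dx']] := ext_sel sPhi3 sG3 fG3 G3P.
have dx : forall v, xm (d v) = 0 by move=> v; apply: (dx' v 0); rewrite /Phi3 (lin0 lxN).
pose lam := fun v => l0 (e1 v) + d (e1 v).
have llam : lin lam by apply: lin_add; apply: lin_comp.
have K : forall m, xm (lam m) + lam (xm m) = f m.
  move=> m; rewrite /lam (linD lxN) dx addr0 l0P // (e1K' (xm m)) ?xx //.
  rewrite (dG3 (xm m) (r m)); last by exists m.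
  by rewrite /r [l0 (xm m) + _]addrC subrK -(linD lf) addrC subrK.
have [P [a [b [pP ha hb fe]]]] := Tr_trivial (lin_comp llam (act_linP g)).
exists P, a, b; split => // m; rewrite -fe /Tr sum2 invg1 !Defs.act1 /=.
rewrite -Defs.actM mulgV Defs.act1 actg_x (actg_x (lam m)) (linD llam).
by rewrite addrACA two0 add0r addrC K.
Qed.
Lemma C2_main (M N : mod) (f : M -> N) : ghost f -> trivial_map f.
Proof. by move=> gf; apply: core2; [exact: gf.1|exact: ghost_G1]. Qed.
End C2.

End C2M.

Module C3M.

Section C3.
Variables (k : fieldType) (gT : finGroupType) (g : gT).
Hypotheses (cover : forall t : gT, t = 1%g \/ t = g \/ t = (g * g)%g) (g1 : g != 1%g)
  (gg1 : (g * g)%g != 1%g) (ggg : (g * g)%g != g) (g3 : (g * (g * g))%g = 1%g)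
  (ch : (3%:R : k) = 0).
Local Notation mod := (kGmod k gT).

Lemma g3' : (g * g * g)%g = 1%g. Proof. by rewrite -mulgA g3. Qed.
Lemma gggg : (g * g * (g * g))%g = g. Proof. by rewrite -mulgA g3 mulg1. Qed.
Lemma ginv : (g^-1)%g = (g * g)%g. Proof. by apply/eqP; rewrite eq_invg_mul g3. Qed.
Lemma gginv : ((g * g)^-1)%g = g. Proof. by apply/eqP; rewrite eq_invg_mul g3'. Qed.

Lemma sum3 (W : zmodType) (F : gT -> W) : \sum_t F t = F 1%g + F g + F (g * g)%g.
Proof.
rewrite (bigD1 1%g) //= (bigD1 g) //= (bigD1 (g * g)%g) /=; last by rewrite gg1 ggg.
rewrite big1 ?addr0 ?addrA //.
move=> t /andP[/andP[t1 tg] tgg].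
by case: (cover t) => [e|[e|e]]; rewrite e eqxx ?andbF in t1 tg tgg.
Qed.

Lemma three0 (M : lmodType k) (v : M) : v + v + v = 0.
Proof.
have : v *+ 3 = 0 by rewrite -scaler_nat ch scale0r.
by rewrite !mulrS mulr0n addr0 addrA.
Qed.

Lemma two_neg (M : lmodType k) (v : M) : v + v = - v.
Proof. by apply/eqP; rewrite -subr_eq0 opprK three0. Qed.

Definition xm (M : mod) (v : M) : M := Defs.act g v - v.

Lemma x_lin (M : mod) : lin (@xm M).
Proof. by move=> c u v; rewrite /xm act_lin scalerBr addrACA opprD. Qed.

Lemma hom_x (M N : mod) (f : M -> N) v : is_hom f -> f (xm v) = xm (f v).
Proof. by move=> hf; rewrite /xm (linB (hom_lin hf)) hf.2. Qed.

Lemma actg_x (M : mod) (v : M) : Defs.act g v = v + xm v.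
Proof. by rewrite /xm addrC subrK. Qed.

Lemma xx_N (M : mod) (v : M) : xm (xm v) = \sum_t Defs.act t v.
Proof.
rewrite sum3 Defs.act1 /xm (linB (act_linP g)) -Defs.actM.
set a := Defs.act g v; set b := Defs.act _ v.
rewrite opprB addrACA -opprD two_neg opprK.
by rewrite [b + v]addrC -addrA [b + a]addrC addrA.
Qed.

Lemma cyc3 (W : zmodType) (a b c : W) : (a - c) + (b - a) + (c - b) = 0.
Proof. by rewrite [a - c + _]addrC subrKA subrKA subrr. Qed.

Lemma xxx (M : mod) (v : M) : xm (xm (xm v)) = 0.
Proof.
rewrite xx_N sum3 /xm !(linB (act_linP _)) -!Defs.actM mul1g g3' !Defs.act1.
exact: cyc3.
Qed.

Lemma act_fix (M : mod) (v : M) : xm v = 0 -> forall t, Defs.act t v = v.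
Proof.
move=> /eqP; rewrite subr_eq0 => /eqP h t.
by case: (cover t) => [->|[->|->]]; rewrite ?Defs.actM ?h ?Defs.act1.
Qed.

Lemma proj_N0 (P : mod) (z : P) : projective P ->
  \sum_t Defs.act t z = 0 -> exists y, z = xm y.
Proof.
move=> pP zN; have [s [hs sP]] := proj_split pP.
have hb := bmap_hom (@lin_id _ P).
set phi := s z.
have phiN : phi 1%g + phi g + phi (g * g)%g = 0.
  have : \sum_t Defs.act t (phi : FM gT P) = 0.
    rewrite /phi; under eq_bigr => t _ do rewrite -hs.2.
    by rewrite -(lin_sum (hom_lin hs)) zN (lin0 (hom_lin hs)).
  move=> /(congr1 (fun u : {ffun gT -> P} => u 1%g)).
  rewrite sum_ffunE sum3 /Fact !ffunE !mulg1 invg1 ginv gginv => <-.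
  by rewrite -!addrA [phi g + _]addrC.
pose psi : {ffun gT -> P} := [ffun t => if t == 1%g then 0 else if t == g then - phi g else phi 1%g].
have ephi : phi = Fact g psi - psi.
  apply/ffunP => t; rewrite !ffunE ginv.
  case: (cover t) => [->|[->|->]].
  - by rewrite mulg1 (negbTE gg1) (negbTE ggg) eqxx subr0.
  - by rewrite -mulgA g3 eqxx (negbTE g1) eqxx sub0r opprK.
  - rewrite gggg (negbTE g1) eqxx (negbTE gg1) (negbTE ggg).
    by apply/eqP; rewrite -opprD -addr_eq0 addrC [phi g + _]addrC phiN.
exists (bmap id psi).
rewrite -[in LHS](sP z) -/phi ephi (linB (hom_lin hb)).
by rewrite -[Fact g psi]/(Defs.act g (psi : FM gT P)) hb.2.
Qed.

Definition cc (t : gT) : k := if t == g then 1 else if t == (g * g)%g then -1 else 0.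
Lemma cc1 : cc 1%g = 0.
Proof. by rewrite /cc eq_sym (negbTE g1) eq_sym (negbTE gg1). Qed.
Lemma ccg : cc g = 1. Proof. by rewrite /cc eqxx. Qed.
Lemma ccgg : cc (g * g)%g = -1. Proof. by rewrite /cc (negbTE ggg) eqxx. Qed.
Lemma k3 : (1 + 1 + 1 : k) = 0.
Proof. by rewrite -ch !mulrS mulr0n addr0 addrA. Qed.
Lemma k2 : (1 + 1 : k) = -1.
Proof. by apply/eqP; rewrite -subr_eq0 opprK k3. Qed.

Lemma cc_mul t s : cc (t * s)%g = cc t + cc s.
Proof.
case: (cover t) => [->|[->|->]]; first by rewrite mul1g cc1 add0r.
- case: (cover s) => [->|[->|->]]; first by rewrite mulg1 cc1 addr0.
  + by rewrite ccg ccgg k2.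
  + by rewrite g3 cc1 ccg ccgg subrr.
- case: (cover s) => [->|[->|->]]; first by rewrite mulg1 cc1 addr0.
  + by rewrite g3' cc1 ccg ccgg addNr.
  + by rewrite gggg ccg ccgg -opprD k2 opprK.
Qed.

Definition J2act (t : gT) (p : (k^o * k^o)%type) : (k^o * k^o)%type := (p.1 + cc t * p.2, p.2).

Lemma J2_lin t c (p q : (k^o * k^o)%type) : J2act t (c *: p + q) = c *: J2act t p + J2act t q.
Proof.
case: p q => [p1 p2] [q1 q2]; rewrite /J2act /=.
congr pair; rewrite /GRing.scale /=.
rewrite -[c *: (p1 + cc t * p2)]/(c * (p1 + cc t * p2)) ?[c *: p2]/(c * p2); ring.
Qed.
Lemma J2_1 (p : (k^o * k^o)%type) : J2act 1%g p = p.
Proof. by case: p => p1 p2; rewrite /J2act /= cc1 mul0r addr0. Qed.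
Lemma J2_M t s (p : (k^o * k^o)%type) : J2act (t * s)%g p = J2act t (J2act s p).
Proof. case: p => p1 p2; rewrite /J2act /= cc_mul; congr pair; ring. Qed.

Definition J2 : mod := KGMod J2_lin J2_1 J2_M.

Lemma fstD (p q : (k^o * k^o)%type) : (p + q).1 = p.1 + q.1. Proof. by []. Qed.
Lemma sndD (p q : (k^o * k^o)%type) : (p + q).2 = p.2 + q.2. Proof. by []. Qed.

Definition w2 (c : k^o) : J2 := c *: ((0, 1) : (k^o * k^o)%type).

Lemma w2_lin : lin w2.
Proof. by move=> c a b; rewrite /w2 scalerDl scalerA. Qed.

Lemma piE (phi : {ffun gT -> k^o}) :
  bmap w2 (phi : FM gT k^o) = (phi g - phi (g * g)%g, phi 1%g + phi g + phi (g * g)%g).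
Proof.
rewrite [LHS]surjective_pairing /bmap sum3 !fstD !sndD /= cc1 ccg ccgg /GRing.scale /=.
congr pair; ring.
Qed.

Lemma Om_J2 : OmegaNeg 1 (triv_mod k gT) J2.
Proof.
exists (triv_mod k gT); split; first by [].
exists (FM gT k^o), (bmap w2), (fun q : triv_mod k gT => [ffun _ => q] : FM gT k^o).
split.
- exact: proj_F.
- exact: bmap_hom w2_lin.
- split; first by move=> c a b; apply/ffunP => s; rewrite !ffunE.
  by move=> t q; apply/ffunP => s; rewrite !ffunE.
- move=> [a b].
  exists ([ffun t => if t == 1%g then b - a else if t == g then a else 0] : FM gT k^o).
  rewrite piE !ffunE eqxx (negbTE g1) eqxx (negbTE gg1) (negbTE ggg).
  congr pair; ring.
- split.
  + by move=> q1 q2 /(congr1 (fun u : {ffun gT -> k^o} => u 1%g)); rewrite !ffunE.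
  + move=> phi; split.
    * rewrite piE => e.
      have e1 := congr1 fst e; have e2 := congr1 snd e; rewrite /= in e1 e2.
      exists (phi 1%g); apply/ffunP => s; rewrite ffunE.
      have h1 : phi (g * g)%g = phi g by apply/eqP; rewrite eq_sym -subr_eq0 e1.
      have h2 : phi 1%g = phi g.
        by apply/eqP; rewrite -subr_eq0; move: e2; rewrite h1 -addrA (two_neg (phi g)) => ->.
      by case: (cover s) => [->|[->|->]]; rewrite ?h1 ?h2.
    * by move=> [q <-]; rewrite piE !ffunE subrr three0.
Qed.

Lemma id3 (W : zmodType) (A B C D E F : W) : A + A + A = 0 ->
  (A - B + C) + ((A + B) + (D + E)) + (A - D + F) = F + E + C.
Proof.
move=> h3.
rewrite [(A - B + C) + _]addrACA [(A - B) + (A + B)]addrACA addNr addr0.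
rewrite [A + A + _ + _]addrACA [A + A + (A - D)]addrA h3 add0r.
rewrite [C + (D + E)]addrCA -[D + (C + E) + F]addrA addKr.
by rewrite [RHS]addrC [F + E]addrC addrA.
Qed.

Lemma act_gg_x (M : mod) (v : M) : Defs.act (g * g)%g v = v - xm v + xm (xm v).
Proof.
rewrite Defs.actM (actg_x v) (linD (act_linP g)) !actg_x addrA -[v + xm v + xm v]addrA.
by rewrite two_neg.
Qed.

Lemma ghost_G1 (M N : mod) (f : M -> N) : ghost f ->
  forall v : M, xm v = 0 -> exists y, f v = xm (xm y).
Proof.
move=> [hf gh] v xv.
pose h := fun c : triv_mod k gT => c *: v.
have hh : is_hom h.
  split; first by move=> c a b; rewrite /h scalerDl scalerA.
  by move=> t c; rewrite /h (linZ (act_linP _)) (act_fix xv).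
have [P [a [b [pP ha hb fe]]]] := gh 0 (triv_mod k gT) h (or_introl erefl) hh.
have zinv : forall t, Defs.act t (a 1) = a 1 by move=> t; rewrite -ha.2.
have [y zy] := proj_inv pP zinv.
exists (b y).
have -> : v = h 1 by rewrite /h scale1r.
rewrite -[f (h 1)]/((f \o h) 1) fe zy (lin_sum (hom_lin hb)) xx_N.
by apply: eq_bigr => t _; rewrite hb.2.
Qed.

Lemma actJ (M : mod) (v : M) : xm (xm v) = 0 -> forall t, Defs.act t v = v + cc t *: xm v.
Proof.
move=> xxv t; case: (cover t) => [->|[->|->]].
- by rewrite Defs.act1 cc1 scale0r addr0.
- by rewrite ccg scale1r actg_x.
- by rewrite act_gg_x xxv addr0 ccgg scaleN1r.
Qed.

Lemma ghost_G2 (M N : mod) (f : M -> N) : ghost f ->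
  forall v : M, xm (xm v) = 0 -> exists y, f v = xm y.
Proof.
move=> [hf gh] v xxv.
pose h := fun p : J2 => p.1 *: xm v + p.2 *: v.
have hh : is_hom h.
  split.
    move=> c [p1 p2] [q1 q2]; rewrite /h /= !scalerDl !scalerDr !scalerA addrACA.
    done.
  move=> t [p1 p2]; rewrite /h /= (linD (act_linP t)) !(linZ (act_linP t)).
  rewrite (act_fix xxv) (actJ xxv) scalerDl (scalerDr p2) scalerA.
  by rewrite -addrA [(cc t * p2) *: _ + _]addrC mulrC.
have [P [a [b [pP ha hb fe]]]] := gh 1 J2 h (or_intror Om_J2) hh.
set e := ((0, 1) : (k^o * k^o)%type) : J2.
have sJ : \sum_t Defs.act t e = 0.
  rewrite sum3 [LHS]surjective_pairing !fstD !sndD /= cc1 ccg ccgg.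
  have -> : (0 : (k^o * k^o)%type) = (0, 0) by [].
  by congr pair; [ring|exact: k3].
have zN : \sum_t Defs.act t (a e) = 0.
  under eq_bigr => t _ do rewrite -ha.2.
  by rewrite -(lin_sum (hom_lin ha)) sJ (lin0 (hom_lin ha)).
have [y zy] := proj_N0 pP zN.
exists (b y).
have -> : v = h e by rewrite /h /= scale0r add0r scale1r.
by rewrite -[f (h e)]/((f \o h) e) fe zy (hom_x _ hb).
Qed.

Lemma core3 (M N : mod) (f : M -> N) : is_hom f ->
  (forall v : M, xm v = 0 -> exists y, f v = xm (xm y)) ->
  (forall v : M, xm (xm v) = 0 -> exists y, f v = xm y) -> trivial_map f.
Proof.
move=> hf G1 G2; have lf := hom_lin hf.
have lxM := @x_lin M; have lxN := @x_lin N.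
pose Phi1 := fun v a : M => xm a = 0.
have sPhi1 : subsp Phi1.
  split; first by rewrite /Phi1 (lin0 lxM).
  by move=> c v a v' a'; rewrite /Phi1 lxM => -> ->; rewrite scaler0 addr0.
pose G01 := fun v a : M => xm v = 0 /\ a = v.
have sG01 : subsp G01.
  split; first by split => //; rewrite (lin0 lxM).
  by move=> c v a v' a' [h1 ->] [h2 ->]; split => //; rewrite lxM h1 h2 scaler0 addr0.
have fG01 : functional G01 by move=> v a b [_ ->] [_ ->].
have G01P : forall v a, G01 v a -> Phi1 v a by move=> v a [h ->].
have [e1 [le1 e1K e1x']] := ext_sel sPhi1 sG01 fG01 G01P.
have e1x : forall v, xm (e1 v) = 0 by move=> v; apply: (e1x' v 0); rewrite /Phi1 (lin0 lxM).
have e1K' : forall v, xm v = 0 -> e1 v = v by move=> v h; apply: e1K.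
have q0 : forall m m', xm m = xm m' -> m - e1 m = m' - e1 m'.
  move=> m m' e; apply/eqP; rewrite -subr_eq0 -(linB (lin_sub (@lin_id _ M) le1)).
  have hd : xm (m - m') = 0 by rewrite (linB lxM) e subrr.
  by rewrite e1K' // subrr.
pose PhiA := fun (v : M) (a : N) => exists m, [/\ xm (xm m) = 0, v = xm m & xm a = f (m - e1 m)].
have sPhiA : subsp PhiA.
  split; first by exists 0; rewrite !(lin0 lxM) (lin0 lxN) (lin0 le1) subrr (lin0 lf).
  move=> c v a v' a' [m1 [h1 -> h1']] [m2 [h2 -> h2']].
  exists (c *: m1 + m2); split.
  - by rewrite !lxM h1 h2 scaler0 addr0.
  - by rewrite lxM.
  - by rewrite lxN h1' h2' -lf (lin_sub (@lin_id _ M) le1).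
have [l1 [ll1 l1P']] := ext_sel0 sPhiA.
have l1P : forall m, xm (xm m) = 0 -> xm (l1 (xm m)) = f (m - e1 m).
  move=> m xxm.
  have [y fy] : exists y, f (m - e1 m) = xm y.
    by apply: G2; rewrite (linB lxM m (e1 m)) e1x subr0.
  have [m' [_ em hm']] := l1P' (xm m) y (ex_intro _ m (And3 xxm erefl (esym fy))).
  by rewrite hm' (q0 m' m).
(* l0 : lift of f on ker x, extending l1 *)
pose Phi2 := fun (v : M) (a : N) => xm v = 0 /\ xm (xm a) = f v.
have sPhi2 : subsp Phi2.
  split; first by rewrite /Phi2 (lin0 lxM) !(lin0 lxN) (lin0 lf).
  by move=> c v a v' a' [h1 h2] [h3 h4]; rewrite /Phi2 lxM !lxN lf h1 h2 h3 h4 scaler0 addr0.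
pose G2r := fun (v : M) (a : N) => (exists m, xm (xm m) = 0 /\ v = xm m) /\ a = l1 v.
have sG2r : subsp G2r.
  split; first by split; [exists 0; rewrite !(lin0 lxM)|rewrite (lin0 ll1)].
  move=> c v a v' a' [[m1 [h1 ->]] ->] [[m2 [h2 ->]] ->]; split; last by rewrite ll1.
  by exists (c *: m1 + m2); rewrite !lxM h1 h2 scaler0 addr0.
have fG2r : functional G2r by move=> v a b [_ ->] [_ ->].
have G2rP : forall v a, G2r v a -> Phi2 v a.
  move=> v a [[m [xxm ->]] ->]; split => //.
  by rewrite l1P // -(hom_x _ hf) (linB lxM) e1x subr0.
have [l0 [ll0 l0G l0P']] := ext_sel sPhi2 sG2r fG2r G2rP.
have l0A : forall v, xm v = 0 -> xm (xm (l0 v)) = f v.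
  by move=> v h; have [y fy] := G1 v h; have [] := l0P' v y (conj h (esym fy)).
have l0B : forall m, xm (xm m) = 0 -> xm (l0 (xm m)) = f (m - e1 m).
  move=> m xxm; rewrite (l0G (xm m) (l1 (xm m))) ?l1P //.
  by split => //; exists m.
pose r := fun m : M => f (m - e1 m) - xm (l0 (e1 (xm m))) - l0 (xm (xm m)).
have lr : lin r.
  apply: lin_sub; last by do 2 apply: lin_comp => //.
  apply: lin_sub; first by apply: lin_comp => //; apply: lin_sub.
  by do 3 apply: lin_comp => //.
have r0 : forall m1 m2, xm (xm m1) = xm (xm m2) -> r m1 = r m2.
  move=> m1 m2 e; apply/eqP; rewrite -subr_eq0 -(linB lr).
  have hd : xm (xm (m1 - m2)) = 0 by rewrite (linB lxM m1 m2) (linB lxM (xm m1) (xm m2)) e subrr.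
  rewrite /r hd (lin0 ll0) subr0 (e1K' (xm (m1 - m2))) // l0B //.
  by rewrite subrr.
pose Phi3 := fun (v : M) (a : N) => xm a = 0.
have sPhi3 : subsp Phi3.
  split; first by rewrite /Phi3 (lin0 lxN).
  by move=> c v a v' a'; rewrite /Phi3 lxN => -> ->; rewrite scaler0 addr0.
pose G3 := fun (v : M) (a : N) => exists m, v = xm (xm m) /\ a = r m.
have sG3 : subsp G3.
  split; first by exists 0; rewrite !(lin0 lxM) (lin0 lr).
  move=> c v a v' a' [m1 [-> ->]] [m2 [-> ->]].
  by exists (c *: m1 + m2); rewrite !lxM lr.
have fG3 : functional G3.
  by move=> v a b [m1 [e1' ->]] [m2 [e2' ->]]; apply: r0; rewrite -e1' -e2'.
have G3P : forall v a, G3 v a -> Phi3 v a.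
  move=> v a [m [-> ->]]; rewrite /Phi3 /r.
  set A1 := f _; set B1 := xm (l0 _); set C1 := l0 _.
  rewrite (linB lxN (A1 - B1) C1) (linB lxN A1 B1) /A1 /B1 /C1 -(hom_x _ hf) l0A ?e1x //.
  rewrite l0B ?xxx // (linB lxM) e1x subr0.
  by rewrite (linB lf (xm m) (e1 (xm m))) subrr.
have [d [ld dG3 dx']] := ext_sel sPhi3 sG3 fG3 G3P.
have dx : forall v, xm (d v) = 0 by move=> v; apply: (dx' v 0); rewrite /Phi3 (lin0 lxN).
pose lam := fun v => l0 (e1 v) + d (e1 v).
have llam : lin lam by apply: lin_add; apply: lin_comp.
have K : forall m, xm (xm (lam m)) + xm (lam (xm m)) + lam (xm (xm m)) = f m.
  move=> m; rewrite /lam (linD lxN (l0 (e1 m))) dx addr0 l0A ?e1x //.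
  rewrite (linD lxN (l0 (e1 (xm m)))) dx addr0.
  rewrite (e1K' (xm (xm m))) ?xxx //.
  rewrite (dG3 (xm (xm m)) (r m)); last by exists m.
  rewrite /r [l0 (xm (xm m)) + _]addrC subrK -addrA [xm (l0 _) + _]addrC subrK.
  by rewrite -(linD lf) addrC subrK.
have [P [a [b [pP ha hb fe]]]] := Tr_trivial (lin_comp llam (act_linP (g * g)%g)).
exists P, a, b; split => // m; rewrite -fe /Tr sum3 invg1 ginv gginv !Defs.act1 /=.
rewrite -!Defs.actM gggg g3' Defs.act1.
rewrite !act_gg_x actg_x (actg_x m).
rewrite (linD llam (m - xm m)) (linB llam m (xm m)) (linD llam m (xm m)).
rewrite (linD lxN (lam m) (lam (xm m))).
rewrite id3; [exact: esym (K m)|exact: three0].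
Qed.

Lemma C3_main (M N : mod) (f : M -> N) : ghost f -> trivial_map f.
Proof. by move=> gf; apply: core3; [exact: gf.1|exact: ghost_G1|exact: ghost_G2]. Qed.

End C3.

End C3M.

Local Close Scope ring_scope.

Lemma exists_nt (gT : finGroupType) n : #|gT| = n.+2 -> exists g : gT, g != 1%g.
Proof.
move=> h.
have : [set~ (1%g : gT)] != set0 by rewrite -card_gt0 cardsC1 h.
by case/set0Pn => g; rewrite in_setC1 => g1; exists g.
Qed.

Theorem proposition3p1 (k : fieldType) (gT : finGroupType) :
  ((#|gT| = 2 /\ (2 \in [pchar k]%R)) \/ (#|gT| = 3 /\ (3 \in [pchar k]%R))) ->
  forall (M N : kGmod k gT) (f : M -> N), ghost f -> trivial_map f.
Proof.
case=> [[H2 c2]|[H3 c3]] M N f.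
- have [g g1] := exists_nt H2.
  have cover : forall t : gT, t = 1%g \/ t = g.
    have eT : [set 1%g; g] = [set: gT].
      apply/eqP; rewrite eqEcard subsetT cardsT H2 cards2 eq_sym g1 //.
    move=> t; have : t \in [set 1%g; g] by rewrite eT inE.
    by rewrite in_set2 => /orP[/eqP ->|/eqP ->]; [left|right].
  have gg : (g * g)%g = 1%g.
    case: (cover (g * g)%g) => // e.
    by move: (congr1 (mulg g^-1) e); rewrite mulKg mulVg => h; rewrite h eqxx in g1.
  exact: (C2M.C2_main cover g1 gg (GRing.pcharf0 c2)).
- have [g g1] := exists_nt H3.
  have og : #[g]%g = 3.
    have d : (#[g]%g %| 3)%N.
      by rewrite orderE -H3 -cardsT; apply: cardSg; exact: subsetT.
    by apply/(prime_nt_dvdP _ _ d) => //; rewrite order_eq1.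
  have g3 : (g * (g * g))%g = 1%g by rewrite -(expg_order g) og !expgS expg0 mulg1.
  have gg1 : (g * g)%g != 1%g.
    by apply/eqP => e; move: g3; rewrite e mulg1 => e'; rewrite e' eqxx in g1.
  have ggg : (g * g)%g != g.
    apply/eqP => e.
    by move: (congr1 (mulg g^-1) e); rewrite mulKg mulVg => h; rewrite h eqxx in g1.
  have cover : forall t : gT, t = 1%g \/ t = g \/ t = (g * g)%g.
    have eT : [set 1%g; g; (g * g)%g] = [set: gT].
      apply/eqP; rewrite eqEcard subsetT cardsT H3 setUC cardsU1 cards2 in_set2.
      by rewrite (negbTE gg1) (negbTE ggg) eq_sym g1.
    move=> t; have : t \in [set 1%g; g; (g * g)%g] by rewrite eT inE.
    by rewrite !inE => /orP[/orP[/eqP ->|/eqP ->]|/eqP ->]; auto.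
  exact: (C3M.C3_main cover g1 gg1 ggg g3 (GRing.pcharf0 c3)).
Qed.
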